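(* The mould $\mathsf{dupal}$, defined by $\mathsf{dupal}^0=0$ and, for $m\ge1$, \[ \mathsf{dupal}^m(x_1,\dots,x_m)=\frac{B_m}{m!}\frac{1}{x_1\cdots x_m}\sum_{k=0}^{m-1}(-1)^k\binom{m-1}{k}x_{k+1}, \] is alternal.
   Context: $B_m$ are the Bernoulli numbers, $\frac{x}{e^x-1}=\sum_{m\ge0}\frac{B_m}{m!}x^m$. A mould is a family $A=(A^m(x_1,\dots,x_m))_{m\ge0}$ with $A^m\in\mathbb{Q}((x_1,\dots,x_m))$, extended linearly to formal linear combinations of words. Shuffle product: $\emptyset\,\text{ш}\,\omega=\omega\,\text{ш}\,\emptyset=\omega$, $a\omega\,\text{ш}\,b\eta=a(\omega\,\text{ш}\,b\eta)+b(a\omega\,\text{ш}\,\eta)$. A mould $A$ with $A^0=0$ is alternal if $A^{p+q}\bigl((x_1,\dots,x_p)\,\text{ш}\,(x_{p+1},\dots,x_{p+q})\bigr)=0$ for all $p,q\ge1$. *)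

(* Defs.v *)
From HB Require Import structures.
From mathcomp Require Import all_boot all_order all_algebra.
From mathcomp Require Import fraction.
From mathcomp Require Import mpoly.
Set Implicit Arguments. Unset Strict Implicit. Unset Printing Implicit Defensive.
Import Order.TTheory GRing.Theory Num.Theory.
Local Open Scope ring_scope.

(* Bernoulli numbers B_0, ..., B_n (convention x/(e^x-1), so B_1 = -1/2),
   computed by the recurrence  sum_{k=0}^{m} C(m+1,k) B_k = 0  (m >= 1),
   which is equivalent to x = (e^x - 1) * sum_m B_m x^m/m!. *)
Fixpoint bern_seq (n : nat) : seq rat :=
  match n with
  | 0 => [:: 1]
  | n'.+1 =>
      let s := bern_seq n' in
      rcons s (- (n'.+2%:R)^-1 * \sum_(k < n'.+1) ('C(n'.+2, k))%:R * s`_k)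
  end.

Definition bernoulli (m : nat) : rat := (bern_seq m)`_m.

(* Shuffle product of two words, as the list (with multiplicity) of all
   words appearing in  s ш t. *)
Fixpoint shuffle {T : Type} (s t : seq T) : seq (seq T) :=
  match s with
  | [::] => [:: t]
  | a :: s' =>
      let fix aux (t : seq T) : seq (seq T) :=
        match t with
        | [::] => [:: s]
        | b :: t' => map (cons a) (shuffle s' t) ++ map (cons b) (aux t')
        end
      in aux t
  end.

Definition dupal {F : fieldType} (y : seq F) : F :=
  let m := size y in
  if m is 0 then 0 else
  ratr (bernoulli m / (m`!)%:R) * (\prod_(a <- y) a)^-1 *
    \sum_(k < m) (-1) ^+ k * ('C(m.-1, k))%:R * y`_k.

Definition ratfun (n : nat) := {fraction {mpoly rat[n]}}.
Definition xvar (n : nat) (i : 'I_n) : ratfun n := tofrac ('X_i : {mpoly rat[n]}).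

(* Alternality of a mould A given by its value on words (A w = A^{|w|}(w)):
   A^0 = 0 and A^{p+q}((x_1..x_p) ш (x_{p+1}..x_{p+q})) = 0 in Q(x_1..x_{p+q}). *)
Definition alternal (A : forall n, seq (ratfun n) -> ratfun n) : Prop :=
  A 0 [::] = 0 /\
  forall p q : nat, (0 < p)%N -> (0 < q)%N ->
    \sum_(w <- shuffle [seq xvar (lshift q i) | i : 'I_p]
                       [seq xvar (rshift p j) | j : 'I_q])
       A (p + q)%N w = 0.

(* Main.v *)
Require Import Defs.
From HB Require Import structures.
From mathcomp Require Import all_boot all_order all_algebra.
From mathcomp Require Import fraction.
From mathcomp Require Import mpoly.
From mathcomp Require Import zify.
Set Implicit Arguments. Unset Strict Implicit. Unset Printing Implicit Defensive.
Import Order.TTheory GRing.Theory Num.Theory.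
Local Open Scope ring_scope.

Section Shuf.
Variable T : Type.

Lemma shuffle0s (t : seq T) : shuffle [::] t = [:: t].
Proof. by []. Qed.

Lemma shuffles0 (s : seq T) : shuffle s [::] = [:: s].
Proof. by case: s. Qed.

Lemma shuffle_cons (a b : T) s t : shuffle (a :: s) (b :: t) =
  map (cons a) (shuffle s (b :: t)) ++ map (cons b) (shuffle (a :: s) t).
Proof. by []. Qed.

Variable R : zmodType.

Lemma sum_sh_cons (F : seq T -> R) a b s t :
  \sum_(w <- shuffle (a :: s) (b :: t)) F w =
  \sum_(w <- shuffle s (b :: t)) F (a :: w) + \sum_(w <- shuffle (a :: s) t) F (b :: w).
Proof. by rewrite shuffle_cons big_cat !big_map. Qed.

Lemma sum_sh_rcons u v a b : forall (F : seq T -> R),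
  \sum_(w <- shuffle (rcons u a) (rcons v b)) F w =
  \sum_(w <- shuffle u (rcons v b)) F (rcons w a) +
  \sum_(w <- shuffle (rcons u a) v) F (rcons w b).
Proof.
have r0 : forall c : T, rcons [::] c = [:: c] by [].
elim: u v => [|x u IHu] v.
  elim: v => [|y v IHv] F.
    by rewrite !r0 /= !big_cons !big_nil /= !addr0 addrC.
  rewrite r0 rcons_cons sum_sh_cons -r0 IHv.
  rewrite !shuffle0s !big_seq1 r0 (sum_sh_cons (fun w => F (rcons w b))).
  rewrite shuffle0s big_seq1 !rcons_cons -r0.
  by rewrite !addrA; congr (_ + _); rewrite addrC.
elim: v => [|y v IHv] F.
  rewrite rcons_cons r0 sum_sh_cons -r0 IHu shuffles0 big_cons big_nil addr0 /=.
  rewrite !big_seq1 big_cat big_map big_seq1 /=.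
  by rewrite addrAC.
rewrite !rcons_cons sum_sh_cons -!rcons_cons IHu IHv.
rewrite (sum_sh_cons (fun w => F (rcons w a))) (sum_sh_cons (fun w => F (rcons w b))) /=.
by rewrite -!addrA; congr (_ + _); rewrite addrCA.
Qed.

End Shuf.

Lemma mem_shuffle_perm (T : eqType) (s t w : seq T) :
  w \in shuffle s t -> perm_eq w (s ++ t).
Proof.
elim: s t w => [|a s IHs] t w.
  by rewrite shuffle0s inE => /eqP ->.
elim: t w => [|b t IHt] w.
  by rewrite shuffles0 inE cats0 => /eqP ->.
rewrite shuffle_cons mem_cat => /orP [] /mapP [w' Hw' ->].
  by rewrite /= perm_cons; apply: IHs.
apply: perm_trans (_ : perm_eq _ ([:: b] ++ (a :: s) ++ t)) _.
  by rewrite /= perm_cons; apply: IHt.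
by rewrite perm_catCA.
Qed.

Definition Lw (R : ringType) (w : seq R) : R :=
  \sum_(k < size w) (-1) ^+ k * ('C((size w).-1, k))%:R * w`_k.

Lemma Lw_split (R : ringType) (x a : R) s :
  Lw (x :: rcons s a) = Lw (x :: s) - Lw (rcons s a).
Proof.
rewrite /Lw /= !size_rcons /=.
set n := size s.
rewrite [LHS]big_ord_recl [X in _ = X - _]big_ord_recl /= !expr0 !bin0 !mul1r.
rewrite -addrA; congr (_ + _).
rewrite /bump /=.
under eq_bigr => i _ do rewrite add1n add0n binS natrD mulrDr mulrDl.
rewrite big_split /=.
rewrite big_ord_recr /= bin_small // mulr0n mulr0 mul0r addr0.
rewrite -sumrN; congr (_ + _).
  apply: eq_bigr => i _; rewrite add1n add0n nth_rcons.
  by rewrite ltn_ord.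
apply: eq_bigr => i _.
by rewrite exprS mulN1r !mulNr.
Qed.

Lemma sum_Lw (R : ringType) n (u v : seq R) : (size u + size v <= n)%N ->
  u != [::] -> v != [::] -> \sum_(w <- shuffle u v) Lw w = 0.
Proof.
elim: n u v => [|n IH] u v.
  by case: u.
move=> Hs Hu Hv.
have Hsz : forall w, w \in shuffle u v -> (2 <= size w)%N.
  move=> w /mem_shuffle_perm /perm_size ->; rewrite size_cat.
  by case: u Hu {Hs} => // ? ?; case: v Hv => // ? ?; rewrite /= addnS.
rewrite big_seq (eq_bigr (fun w => Lw (take (size w).-1 w) - Lw (behead w))); last first.
  move=> w /Hsz; case/lastP: w => // w0 a; case: w0 => // x s _.
  rewrite Lw_split size_rcons /= -cats1 /= take_size_cat //.
rewrite -big_seq sumrB.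
have E : forall (u1 v1 : seq R), (size u1 + size v1 <= n)%N -> v1 != [::] ->
    \sum_(w <- shuffle u1 v1) Lw w = if u1 is [::] then Lw v1 else 0.
  move=> u1 v1 H1 H2; case: u1 H1 => [|y u1] H1; first by rewrite shuffle0s big_seq1.
  by apply: IH.
have E' : forall (u1 v1 : seq R), (size u1 + size v1 <= n)%N -> u1 != [::] ->
    \sum_(w <- shuffle u1 v1) Lw w = if v1 is [::] then Lw u1 else 0.
  move=> u1 v1 H1 H2; case: v1 H1 => [|y v1] H1; first by rewrite shuffles0 big_seq1.
  by apply: IH.
have -> : \sum_(w <- shuffle u v) Lw (behead w) =
   (if behead u is [::] then Lw v else 0) + (if behead v is [::] then Lw u else 0).
  case: u Hu Hs {Hsz} => // x u1 _; case: v Hv => // y v1 _ Hs.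
  rewrite sum_sh_cons (E u1 (y :: v1)) //.
  by rewrite (E' (x :: u1) v1) //; move: Hs; rewrite /= addnS ltnS.
case/lastP: u Hu Hs {Hsz} => // u0 a _; case/lastP: v Hv => // v0 b _ Hs.
rewrite sum_sh_rcons.
have Hf : forall (w : seq R) c, Lw (take (size (rcons w c)).-1 (rcons w c)) = Lw w.
  by move=> w c; rewrite size_rcons /= -cats1 take_size_cat.
under eq_bigr => w _ do rewrite Hf.
under [X in _ + X - _]eq_bigr => w _ do rewrite Hf.
rewrite !size_rcons in Hs.
have Hm : forall (s : seq R) c (A : R),
    match behead (rcons s c) with [::] => A | _ :: _ => 0 end =
    match s with [::] => A | _ :: _ => 0 end.
  by move=> s0 c A; rewrite -cats1; case: s0 => [|? [|? ?]].
rewrite (E u0) ?size_rcons; [| lia | by case: v0 {Hs}].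
rewrite (E' (rcons u0 a)) ?size_rcons; [| lia | by case: u0 {Hs}].
by rewrite !Hm subrr.
Qed.
Lemma dupal_eq (F : fieldType) (w : seq F) : w != [::] ->
  dupal w = ratr (bernoulli (size w) / ((size w)`!)%:R) * (\prod_(a <- w) a)^-1 * Lw w.
Proof. by case: w. Qed.

Theorem proposition1p30 : alternal (fun n (w : seq (ratfun n)) => dupal w).
Proof.
split => // p q hp hq.
set U := [seq _ | i : 'I_p]; set V := [seq _ | j : 'I_q].
have sU : size U = p by rewrite size_map size_enum_ord.
have sV : size V = q by rewrite size_map size_enum_ord.
rewrite big_seq (eq_bigr (fun w => (ratr (bernoulli (p + q) / ((p + q)`!)%:R) *
   (\prod_(a <- U ++ V) a)^-1) * Lw w)).
  rewrite -big_seq -big_distrr /= (sum_Lw (leqnn _)) ?mulr0 //.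
    by rewrite -size_eq0 sU -lt0n.
  by rewrite -size_eq0 sV -lt0n.
move=> w Hw; have Hp := mem_shuffle_perm Hw.
have sw : size w = (p + q)%N by rewrite (perm_size Hp) size_cat sU sV.
rewrite dupal_eq; last by rewrite -size_eq0 sw -lt0n addn_gt0 hp.
by rewrite sw (perm_big _ Hp).
Qed.
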